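(* Let $t\in\mathbb{N}$ be a constant, let $n=2^m$, and let $\beta=\log_2\sqrt[t+1]{2^{t+1}-1}$. Then the running time of $\mathrm{cover}(\mathbf{v},r)$ (described in the context) on inputs $\mathbf{v}\in\mathbb{F}_2^{t\times n}$ is: $O(n^{t+1})$ when $r$ is constant; $O(n^{(t+1)(1-\alpha\beta)})$ when $r=\alpha m$ with $0<\alpha<\frac{t}{(t+1)\beta}$ constant; and $O(n\log n)$ when $r=m-s$ with $s$ constant, or when $r=\alpha m$ with $\frac{t}{(t+1)\beta}\leq \alpha<1$ constant.
   Context: For a $t\times n$ binary matrix $\mathbf{v}$ with rows $\overline{v}_1,\dots,\overline{v}_t$, $\mathrm{wt}^{(t)}(\mathbf{v})=\left|\bigcup_{i} \mathrm{supp}(\overline{v}_i)\right|$ and $d^{(t)}(\mathbf{u},\mathbf{v})=\mathrm{wt}^{(t)}(\mathbf{u}-\mathbf{v})$. For a linear code $C\subseteq\mathbb{F}_2^n$, $C^t$ is the set of $t\times n$ matrices all of whose rows lie in $C$. Reed–Muller codes: $\mathrm{RM}(0,m)=\{\overline{0},\overline{1}\}\subseteq\mathbb{F}_2^{2^m}$, $\mathrm{RM}(m,m)=\mathbb{F}_2^{2^m}$, and for $1\leq r\leq m-1$, $\mathrm{RM}(r,m)=\{(\overline{u},\overline{u}+\overline{v}) : \overline{u}\in \mathrm{RM}(r,m-1),\ \overline{v}\in\mathrm{RM}(r-1,m-1)\}$. The algorithm: $\mathrm{recursive}(\mathbf{v},r)$, for $\mathbf{v}\in\mathbb{F}_2^{t\times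 2^m}$ and $1\le r\le m$: if $r=m$, return $\mathbf{v}$; if $r=1$, return a matrix $\mathbf{c}\in\mathrm{RM}(1,m)^t$ minimizing $d^{(t)}(\mathbf{v},\mathbf{c})$, found by exhaustively computing $d^{(t)}(\mathbf{v},\mathbf{c})$ for every $\mathbf{c}\in\mathrm{RM}(1,m)^t$; otherwise write $\mathbf{v}=(\mathbf{v}_1,\mathbf{v}_2)$ with $\mathbf{v}_1,\mathbf{v}_2\in\mathbb{F}_2^{t\times 2^{m-1}}$ (first and second halves of the columns), compute $\mathbf{c}_1=\mathrm{recursive}(\mathbf{v}_1,r)$ and $\mathbf{c}_2=\mathrm{recursive}(\mathbf{v}_2-\mathbf{c}_1,r-1)$, and return $(\mathbf{c}_1,\mathbf{c}_1+\mathbf{c}_2)$. $\mathrm{subadditive}(\mathbf{v},r)$: apply $\mathrm{recursive}$ separately to each row of $\mathbf{v}$ and stack the results. $\mathrm{cover}(\mathbf{v},r)$: compute $\mathrm{recursive}(\mathbf{v},r)$ and $\mathrm{subadditive}(\mathbf{v},r)$ and return whichever is closer to $\mathbf{v}$ in $d^{(t)}$. *)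

(* Defs.v *)
From Stdlib Require Import Reals.
From mathcomp Require Import all_boot.

Set Implicit Arguments.
Unset Strict Implicit.
Unset Printing Implicit Defensive.

Definition row := seq bool.
Definition mat := seq row.

(** Row / matrix addition over F_2 (= subtraction). *)
Definition xorr (a b : row) : row := [seq addb x.1 x.2 | x <- zip a b].
Definition madd (u v : mat) : mat := [seq xorr x.1 x.2 | x <- zip u v].

Definition msize (v : mat) : nat := sumn (map size v).

Definition colsupp (v : mat) : row :=
  foldr (fun r acc => [seq x.1 || x.2 | x <- zip r acc])
        (nseq (size (head [::] v)) false) v.

Definition wtt (v : mat) : nat := count (fun b : bool => b) (colsupp v).
Definition distt (u v : mat) : nat := wtt (madd u v).

(** Cost (bit operations) of computing d^(t)(u,v): one pass to form u - v and
    one pass to form the union of supports and count it. *)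
Definition dist_cost (u v : mat) : nat := 2 * msize u.

Fixpoint allwords (k : nat) : seq row :=
  match k with
  | 0 => [:: [::]]
  | k'.+1 => [seq b :: w | b <- [:: false; true], w <- allwords k']
  end.

(** The codewords of RM(r,m), listed via the recursive (u | u+v) definition. *)
Fixpoint rm (r m : nat) : seq row :=
  match m with
  | 0 => allwords 1
  | m'.+1 =>
      if r == 0 then [:: nseq (2 ^ m) false; nseq (2 ^ m) true]
      else if m <= r then allwords (2 ^ m)
      else [seq u ++ xorr u w | u <- rm r m', w <- rm r.-1 m']
  end.

Fixpoint tuples (k : nat) (s : seq row) : seq mat :=
  match k with
  | 0 => [:: [::]]
  | k'.+1 => [seq c :: cs | c <- s, cs <- tuples k' s]
  end.

(** Exhaustive search for the closest element of RM(1,m)^t (t = number of rows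
    of v), returning the result together with its running time: generating the
    code, and for each candidate generating it, computing its d^(t)-distance to
    v and one comparison. *)
Definition exhaustive (m : nat) (v : mat) : mat * nat :=
  let L := 2 ^ m in
  let code := rm 1 m in
  let cands := tuples (size v) code in
  let best := match cands with
              | [::] => v
              | c0 :: cs => foldl (fun b c => if distt v c < distt v b then c else b) c0 cs
              end in
  (best, size code * L + size cands * (3 * size v * L + 1)).

(** recursive(v, r) for v in F_2^{t x 2^m}, instrumented with its running
    time (second component).  Otherwise split, recurse twice, and
    combine; splitting, the two matrix additions and the concatenation cost
    linear time each. *)
Fixpoint recursive (m r : nat) (v : mat) {struct m} : mat * nat :=
  if r == m then (v, msize v) else
  match m with
  | 0 => (v, msize v)
  | m'.+1 =>
      if r == 1 then exhaustive m v else
      let h := 2 ^ m' in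
      let v1 := map (take h) v in
      let v2 := map (drop h) v in
      let (c1, k1) := recursive m' r v1 in
      let (c2, k2) := recursive m' r.-1 (madd v2 c1) in
      ([seq x.1 ++ x.2 | x <- zip c1 (madd c1 c2)], k1 + k2 + 3 * msize v)
  end.

Definition subadditive (m r : nat) (v : mat) : mat * nat :=
  let rs := [seq recursive m r [:: x] | x <- v] in
  (flatten (map fst rs), sumn (map snd rs)).

Definition rm_cover (m r : nat) (v : mat) : mat * nat :=
  let (a, ka) := recursive m r v in
  let (b, kb) := subadditive m r v in
  (if distt v b < distt v a then b else a,
   ka + kb + dist_cost v a + dist_cost v b + 1).

Definition cover_time (m r : nat) (v : mat) : nat := (rm_cover m r v).2.

Definition is_input (t m : nat) (v : mat) : Prop :=
  size v = t /\ all (fun x : row => size x == 2 ^ m) v.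

Local Open Scope R_scope.
Definition log2 (x : R) : R := ln x / ln 2.
Definition beta (t : nat) : R :=
  log2 (Rpower (2 ^ (t + 1) - 1) (/ INR (t + 1))).

(* Main.v *)
Require Import Defs.
From Stdlib Require Import Reals Lra Lia.
From mathcomp Require Import all_boot zify.

Lemma size_allwords k : size (allwords k) = 2 ^ k.
Proof. elim: k => [|k IH] //=; rewrite !size_cat !size_map IH addn0 expnS mul2n addnn //. Qed.

Lemma size_rm0 m : size (rm 0 m) = 2.
Proof. by case: m. Qed.

Lemma rm_S r m : rm r m.+1 =
      if r == 0 then [:: nseq (2 ^ m.+1) false; nseq (2 ^ m.+1) true]
      else if m.+1 <= r then allwords (2 ^ m.+1)
      else [seq u ++ xorr u w | u <- rm r m, w <- rm r.-1 m].
Proof. by []. Qed.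

Lemma size_rm1 m : size (rm 1 m) = 2 ^ m.+1.
Proof.
elim: m => [|m IH] //.
case: m IH => [|m] IH //.
rewrite rm_S.
change (size [seq u ++ xorr u w | u <- rm 1 m.+1, w <- rm 0 m.+1] = 2 ^ m.+3).
by rewrite size_allpairs IH size_rm0 [in RHS]expnS mulnC.
Qed.

Lemma size_tuples k s : size (tuples k s) = size s ^ k.
Proof. elim: k => [|k IH] //; rewrite /tuples -/tuples size_allpairs IH expnS //. Qed.

Definition good (k L : nat) (v : mat) :=
  (size v <= k) && all (fun x : row => size x <= L) v.

Lemma msize_good k L v : good k L v -> msize v <= k * L.
Proof.
elim: v k => [|x v IH] [|k] //=; rewrite /good /= => /andP [Hs /andP [Hx Ha]]; rewrite ?ltnS in Hs.
rewrite mulSn leq_add //; apply: IH; by rewrite /good Hs Ha.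
Qed.

Lemma size_xorr a b : size (xorr a b) = minn (size a) (size b).
Proof. by rewrite /xorr size_map size_zip. Qed.

Lemma good_madd k L u w : good k L u -> good k L (madd u w).
Proof.
elim: u w k => [|x u IH] [|y w] [|k] //=; rewrite /good /= => /andP [Hs /andP [Hx Ha]]; rewrite ?ltnS in Hs.
have := IH w k; rewrite /good Hs Ha => /(_ isT) /andP [H1 H2].
rewrite /madd in H1 H2; rewrite ltnS H1 H2 size_xorr andbT /=. apply: leq_trans Hx; exact: geq_minl.
Qed.

Lemma good_take k h L v : good k L v -> good k h (map (take h) v).
Proof.
rewrite /good size_map => /andP [-> _] /=; apply/allP => x /mapP [y _ ->].
by rewrite size_take; case: ltnP => // /ltnW.
Qed.

Lemma good_drop k h v : good k (h + h) v -> good k h (map (drop h) v).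
Proof.
rewrite /good size_map => /andP [-> /allP Ha] /=; apply/allP => x /mapP [y Hy ->].
rewrite size_drop; have := Ha y Hy => /=; lia.
Qed.

Definition Acst (t : nat) := 2 + 2 ^ t * (3 * t + 1).

Lemma exh_bound t m v : 0 < t -> size v <= t ->
  (exhaustive m v).2 <= Acst t * 2 ^ (m * t.+1).
Proof.
move=> Ht Hv; rewrite /exhaustive /= size_tuples size_rm1 /Acst mulnDl.
apply: leq_add.
  rewrite expnS -mulnA -expnD leq_mul2l /= leq_exp2l //; nia.
have h1 : (2 ^ m.+1) ^ size v <= (2 ^ m.+1) ^ t by apply: leq_pexp2l; rewrite ?expn_gt0.
have hm : 1 <= 2 ^ m by rewrite expn_gt0.
have h2 : 3 * size v * 2 ^ m + 1 <= (3 * t + 1) * 2 ^ m by nia.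
have e1 : (2 ^ m.+1) ^ t = 2 ^ t * 2 ^ (m * t) by rewrite expnS expnMn -expnM.
have e2 : 2 ^ (m * t.+1) = 2 ^ m * 2 ^ (m * t) by rewrite mulnS expnD.
rewrite e2; have := leq_mul h1 h2; rewrite e1; nia.
Qed.

Lemma rec_S m r v : recursive m.+1 r v =
  if r == m.+1 then (v, msize v) else
  if r == 1 then exhaustive m.+1 v else
      let h := 2 ^ m in
      let v1 := map (take h) v in
      let v2 := map (drop h) v in
      let (c1, k1) := recursive m r v1 in
      let (c2, k2) := recursive m r.-1 (madd v2 c1) in
      ([seq x.1 ++ x.2 | x <- zip c1 (madd c1 c2)], k1 + k2 + 3 * msize v).
Proof. by []. Qed.

Lemma rec_bound t : 0 < t -> forall m r v, 1 <= r <= m -> good t (2 ^ m) v ->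
  (recursive m r v).2 * (2 ^ t.+1 - 1) ^ r.-1 <=
  Acst t * 2 ^ (m * t.+1) + 6 * t * r * 2 ^ m * (2 ^ t.+1 - 1) ^ r.-1.
Proof.
move=> Ht; set q := 2 ^ t.+1 - 1.
have Hq : q + 1 = 2 ^ t.+1 by rewrite /q subnK // expn_gt0.
elim=> [|m IH] r v /andP [Hr1 Hrm] Hg; first by case: r Hr1 Hrm.
rewrite rec_S.
have Hms := msize_good _ _ _ Hg.
case: eqP => [Erm|Nrm].
  rewrite /=; apply: leq_trans (leq_addl _ _).
  rewrite leq_mul2r; apply/orP; right.
  apply: leq_trans Hms _; nia.
case: eqP => [Er1|Nr1].
  subst r; rewrite expn0 muln1; apply: leq_trans (leq_addr _ _).
  apply: exh_bound => //; by case/andP: Hg.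
have Hrm' : r <= m by move: Nrm Hrm; lia.
case: r Hr1 Hrm Nrm Nr1 Hrm' => [|[|j]] // _ _ _ _ Hjm.
rewrite /=.
case E1: (recursive m j.+2 (map (take (2 ^ m)) v)) => [c1 k1].
have Hg1 : good t (2 ^ m) (map (take (2 ^ m)) v) by apply: good_take Hg.
have := IH j.+2 _ Hjm Hg1; rewrite E1 /= => H1.
case E2: (recursive m j.+1 (madd (map (drop (2 ^ m)) v) c1)) => [c2 k2] /=.
have Hg2 : good t (2 ^ m) (madd (map (drop (2 ^ m)) v) c1).
  apply: good_madd; apply: good_drop; by rewrite addnn -mul2n -expnS.
have := IH j.+1 _ _ Hg2; rewrite E2 /= => H2.
have {H2} H2 := H2 (ltnW Hjm).
have e1 : 2 ^ (m.+1 * t.+1) = 2 ^ (m * t.+1) * (q + 1) by rewrite Hq mulSn expnD mulnC.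
have e2 : 2 ^ m.+1 = 2 * 2 ^ m by rewrite expnS.
have e3 : q ^ j.+1 = q * q ^ j by rewrite expnS.
rewrite e1 e2 e3; rewrite e3 in H1.
have H2' := leq_mul (leqnn q) H2.
move: Hms; rewrite e2 => Hms.
have H3 := leq_mul (leqnn (3 * q * q ^ j)) Hms.
nia.
Qed.

Lemma sub_bound t m r v : 1 <= r <= m -> good t (2 ^ m) v ->
  (subadditive m r v).2 * 3 ^ r.-1 <=
  t * (10 * 2 ^ (m * 2) + 6 * r * 2 ^ m * 3 ^ r.-1).
Proof.
move=> Hr; rewrite /subadditive /=.
elim: v t => [|x v IH] [|t] //=; rewrite /good /= => /andP [Hs /andP [Hx Ha]].
have H1 := rec_bound 1 isT m r [:: x] Hr.
have {H1} H1 : (recursive m r [:: x]).2 * 3 ^ r.-1 <=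
  10 * 2 ^ (m * 2) + 6 * r * 2 ^ m * 3 ^ r.-1.
  by apply: H1; rewrite /good /= Hx.
have H2 := IH t; rewrite /good -ltnS Hs Ha in H2.
have {H2} H2 := H2 isT.
rewrite -map_comp in H2. rewrite -map_comp /=.
move: H1 H2; set a := (recursive m r [:: x]).2; set b := sumn _.
rewrite mulnDl mulSn; lia.
Qed.

Lemma cover_eq m r v : cover_time m r v =
  (recursive m r v).2 + (subadditive m r v).2 + 4 * msize v + 1.
Proof.
rewrite /cover_time /rm_cover; case: (recursive m r v) => a ka.
case: (subadditive m r v) => b kb /=; rewrite /dist_cost; lia.
Qed.

Lemma q_le3 t : 2 ^ t.+1 - 1 <= 3 ^ t.
Proof.
elim: t => [|t IH] //; rewrite expnS [3 ^ t.+1]expnS.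
have : 1 <= 3 ^ t by rewrite expn_gt0. lia.
Qed.

Lemma q_ge2 t : 2 ^ t <= 2 ^ t.+1 - 1.
Proof. rewrite expnS; have : 1 <= 2 ^ t by rewrite expn_gt0. lia. Qed.

Local Open Scope R_scope.

Lemma INR_mul a b : INR (a * b)%N = INR a * INR b.
Proof. by rewrite mulnE mult_INR. Qed.
Lemma INR_add a b : INR (a + b)%N = INR a + INR b.
Proof. by rewrite addnE plus_INR. Qed.
Lemma INR_exp a k : INR (a ^ k)%N = INR a ^ k.
Proof. elim: k => [|k IH] //; by rewrite expnS INR_mul IH. Qed.
Lemma INR2 : INR 2 = 2.
Proof. simpl; lra. Qed.
Lemma INR3 : INR 3 = 3.
Proof. simpl; lra. Qed.

Lemma natpow_exp a k : (0 < a)%N -> INR (a ^ k)%N = exp (INR k * ln (INR a)).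
Proof.
move=> Ha; rewrite INR_exp -Rpower_pow //; apply: lt_0_INR; by apply/ltP.
Qed.

Lemma exp_mono x y : x <= y -> exp x <= exp y.
Proof. case/Rle_lt_or_eq_dec => [H|->]; [left; exact: exp_increasing | lra]. Qed.

Lemma ln_mono x y : 0 < x -> x <= y -> ln x <= ln y.
Proof. move=> Hx; case/Rle_lt_or_eq_dec => [H|->]; [left; exact: ln_increasing | lra]. Qed.

Lemma divR (T Q X Z : nat) : (T * Q <= X + Z * Q)%N -> (0 < Q)%N ->
  INR T <= INR X / INR Q + INR Z.
Proof.
move=> /leP H /ltP HQ; have HQ' := lt_0_INR _ HQ.
have := le_INR _ _ H; rewrite INR_mul INR_add INR_mul => H'.
apply: (Rmult_le_reg_r (INR Q)) => //.
rewrite Rmult_plus_distr_r; unfold Rdiv; rewrite Rmult_assoc Rinv_l; lra.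
Qed.

Lemma exp_div a b : exp a / exp b = exp (a - b).
Proof. by rewrite /Rminus exp_plus exp_Ropp. Qed.

Lemma cover_real t m r v : (0 < t)%N -> (1 <= r <= m)%N -> is_input t m v ->
 INR (cover_time m r v) <=
   INR (Acst t) * exp (INR m * (INR t + 1) * ln 2 - (INR r - 1) * ln (INR (2 ^ t.+1 - 1)))
 + 10 * INR t * exp (2 * INR m * ln 2 - (INR r - 1) * ln 3)
 + (12 * INR t * INR r + 4 * INR t) * exp (INR m * ln 2) + 1.
Proof.
move=> Ht Hr [Hs Ha].
have Hg : good t (2 ^ m) v.
  rewrite /good Hs leqnn /=; apply/allP => x Hx; have := allP Ha x Hx; by move/eqP ->.
have Hq : (0 < 2 ^ t.+1 - 1)%N by apply: leq_trans (q_ge2 t); rewrite expn_gt0.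
have HT := rec_bound t Ht m r v Hr Hg.
have HS := sub_bound t m r v Hr Hg.
have Hms := msize_good _ _ _ Hg.
set A := Acst t in HT *; clearbody A.
set q := (2 ^ t.+1 - 1)%N in HT Hq *; clearbody q.
have HT' : INR (recursive m r v).2 <= INR (A * 2 ^ (m * t.+1)) / INR (q ^ r.-1)
   + INR (6 * t * r * 2 ^ m).
  apply: divR; first by []. by rewrite expn_gt0 Hq.
have HS2 : ((subadditive m r v).2 * 3 ^ r.-1 <= t * 10 * 2 ^ (m * 2) + (t * 6 * r * 2 ^ m) * 3 ^ r.-1)%N.
  move: HS; rewrite mulnDr !mulnA //.
have HS' := divR _ _ _ _ HS2 (expn_gt0 3 r.-1).
rewrite cover_eq INR_add INR_add INR_add [INR (4 * _)]INR_mul.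
have Hms' := le_INR _ _ (elimT leP Hms).
rewrite !INR_mul in HT' HS' Hms'.
rewrite !natpow_exp // in HT' HS' Hms'.
have Er : INR r.-1 = INR r - 1.
  case/andP: Hr => H1 _; have E := ltn_predK H1; rewrite -[in INR r]E S_INR; ring.
rewrite Er !INR_mul S_INR INR2 INR3 in HT' HS' Hms'.
have E6 : INR 6 = 6 by simpl; lra.
have E10 : INR 10 = 10 by simpl; lra.
have E4 : INR 4 = 4 by simpl; lra.
rewrite E6 E10 in HT' HS'; rewrite E4 (_ : INR 1 = 1) //.
rewrite -!exp_div; have -> : 2 * INR m * ln 2 = INR m * 2 * ln 2 by ring.
move: HT' HS' Hms'.
set e1 := exp (INR m * (INR t + 1) * ln 2); set e2 := exp ((INR r - 1) * ln (INR q)).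
set e3 := exp (INR m * 2 * ln 2); set e4 := exp ((INR r - 1) * ln 3).
set e5 := exp (INR m * ln 2).
rewrite /Rdiv; set f1 := e1 * / e2; set f2 := e3 * / e4.
have -> : INR A * e1 * / e2 = INR A * f1 by rewrite /f1; ring.
have -> : INR t * 10 * e3 * / e4 = INR t * 10 * f2 by rewrite /f2; ring.
move=> H1 H2 H3; lra.
Qed.

Lemma ln2_pos : 0 < ln 2.
Proof. rewrite -ln_1; apply: ln_increasing; lra. Qed.

Lemma lnN m : ln (INR (2 ^ m)%N) = INR m * ln 2.
Proof. by rewrite natpow_exp // ln_exp INR2. Qed.

Lemma INRq t : INR (2 ^ t.+1 - 1)%N = 2 ^ (t + 1) - 1.
Proof.
rewrite minus_INR; last by apply/leP; rewrite expn_gt0.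
by rewrite INR_exp INR2 addn1.
Qed.

Lemma beta_eq t : INR (t + 1)%N * beta t = ln (INR (2 ^ t.+1 - 1)%N) / ln 2.
Proof.
rewrite /beta /log2 ln_Rpower INRq.
have H : INR (t + 1) <> 0 by apply: not_0_INR; rewrite addn1.
have := ln2_pos; move=> H2. field; split => //; lra.
Qed.

Lemma lq_facts t : (0 < t)%N ->
  let lq := ln (INR (2 ^ t.+1 - 1)%N) in
  ln 3 <= lq /\ lq <= INR t * ln 3 /\ INR t * ln 2 <= lq.
Proof.
move=> Ht lq.
have Hq3 : (3 <= 2 ^ t.+1 - 1)%N.
  have H2 : (2 <= 2 ^ t)%N by have := leq_pexp2l (isT : (0 < 2)%N) (Ht : (1 <= t)%N).
  rewrite expnS; lia.
have Hq : (0 < 2 ^ t.+1 - 1)%N by apply: leq_trans Hq3.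
split; [|split].
- rewrite /lq -INR3; apply: ln_mono; first by simpl; lra.
  by apply: le_INR; apply/leP.
- rewrite /lq -INR3 -ln_pow; last by simpl; lra.
  rewrite -INR_exp; apply: ln_mono; first by apply: lt_0_INR; apply/ltP.
  by apply: le_INR; apply/leP; apply: q_le3.
- rewrite /lq -INR2 -ln_pow; last by simpl; lra.
  rewrite -INR_exp; apply: ln_mono; first by apply: lt_0_INR; apply/ltP; rewrite expn_gt0.
  by apply: le_INR; apply/leP; apply: q_ge2.
Qed.

Lemma fin_nlogn (Y A T Rr Mm X1 X2 e5 a b : R) : 0 <= A -> 1 <= T -> 1 <= Mm -> Rr <= Mm -> 1 <= e5 ->
  X1 <= exp a * e5 -> X2 <= exp b * e5 ->
  Y <= A * X1 + 10 * T * X2 + (12 * T * Rr + 4 * T) * e5 + 1 ->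
  Y <= (A * exp a + 10 * T * exp b + 16 * T + 1) * e5 * Mm.
Proof.
move=> HA HT HM HR He h1 h2 Hb.
have ea := exp_pos a; have eb := exp_pos b.
have g1 := Rmult_le_compat_l _ _ _ HA h1.
have g2 := Rmult_le_compat_l (10 * T) _ _ ltac:(lra) h2.
have k1 : A * exp a * e5 <= A * exp a * e5 * Mm.
  have := Rmult_le_pos (A * exp a * e5) (Mm - 1) ltac:(apply: Rmult_le_pos; [apply: Rmult_le_pos|]; lra) ltac:(lra). lra.
have k2 : 10 * T * exp b * e5 <= 10 * T * exp b * e5 * Mm.
  have := Rmult_le_pos (10 * T * exp b * e5) (Mm - 1) ltac:(apply: Rmult_le_pos; [apply: Rmult_le_pos|]; lra) ltac:(lra). lra.
have k3 : 12 * T * Rr * e5 <= 12 * T * Mm * e5.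
  have := Rmult_le_pos (12 * T * e5) (Mm - Rr) ltac:(apply: Rmult_le_pos; lra) ltac:(lra). lra.
have k4 : 4 * T * e5 <= 4 * T * e5 * Mm.
  have := Rmult_le_pos (4 * T * e5) (Mm - 1) ltac:(apply: Rmult_le_pos; lra) ltac:(lra). lra.
have k5 : 1 <= e5 * Mm by nra.
lra.
Qed.

Theorem corollary23 (t : nat) : (0 < t)%N ->
  (* r constant: O(n^(t+1)) *)
  (forall r : nat, (1 <= r)%N ->
     exists (C : R) (M : nat), forall (m : nat) (v : mat),
       (M <= m)%N -> (r <= m)%N -> is_input t m v ->
       (INR (cover_time m r v) <= C * Rpower (INR (2 ^ m)%N) (INR (t + 1)%N))) /\
  (* r = alpha m, 0 < alpha < t/((t+1) beta): O(n^((t+1)(1 - alpha beta))) *)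
  (forall alpha : R,
     (0 < alpha < INR t / (INR (t + 1)%N * beta t)) ->
     exists (C : R) (M : nat), forall (m r : nat) (v : mat),
       (M <= m)%N -> (1 <= r <= m)%N ->
       (Rabs (INR r - alpha * INR m) < 1) -> is_input t m v ->
       (INR (cover_time m r v)
          <= C * Rpower (INR (2 ^ m)%N) (INR (t + 1)%N * (1 - alpha * beta t)))) /\
  (* r = m - s, s constant: O(n log n) *)
  (forall s : nat,
     exists (C : R) (M : nat), forall (m : nat) (v : mat),
       (M <= m)%N -> is_input t m v ->
       (INR (cover_time m (m - s) v) <= C * INR (2 ^ m)%N * log2 (INR (2 ^ m)%N))) /\
  (* r = alpha m, t/((t+1) beta) <= alpha < 1: O(n log n) *)
  (forall alpha : R,
     (INR t / (INR (t + 1)%N * beta t) <= alpha < 1) ->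
     exists (C : R) (M : nat), forall (m r : nat) (v : mat),
       (M <= m)%N -> (1 <= r <= m)%N ->
       (Rabs (INR r - alpha * INR m) < 1) -> is_input t m v ->
       (INR (cover_time m r v) <= C * INR (2 ^ m)%N * log2 (INR (2 ^ m)%N))).
Proof.
move=> Ht.
have := lq_facts t Ht; move=> /= [Hl3 [Hlq3 Hlq2]].
have Hbeta := beta_eq t.
move: Hl3 Hlq3 Hlq2 Hbeta; set lq := ln (INR (2 ^ t.+1 - 1)%N) => Hl3 Hlq3 Hlq2 Hbeta.
have HL := ln2_pos.
have Ht1 : INR (t + 1)%N = INR t + 1 by rewrite INR_add.
have Htpos : 1 <= INR t by apply: (le_INR 1); apply/leP.
have HL3 : ln 2 < ln 3 by apply: ln_increasing; lra.
have HA := pos_INR (Acst t).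
have Hm2 : forall m : nat, INR m <= exp (INR m * ln 2).
  move=> m; rewrite -INR2 -natpow_exp //; apply: le_INR; apply/leP; apply: ltnW; exact: ltn_expl.
have Hrle : forall a b : nat, (a <= b)%N -> INR a <= INR b.
  by move=> a b H; apply: le_INR; apply/leP.
have exp_ge1 : forall x, 0 <= x -> 1 <= exp x.
  by move=> x Hx; rewrite -exp_0; apply: exp_mono.
split; [|split; [|split]].
- move=> r Hr.
  exists (INR (Acst t) + 10 * INR t + 16 * INR t + 1), 0%N => m v _ Hrm Hv.
  have Hb := cover_real t m r v Ht (introT andP (conj Hr Hrm)) Hv.
  rewrite /Rpower lnN Ht1.
  have Hr1 : 1 <= INR r := Hrle 1%N r Hr; have Hrm' := Hrle _ _ Hrm.
  have Hm0 := pos_INR m.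
  have Hm := Hm2 m.
  set P := exp ((INR t + 1) * (INR m * ln 2)).
  have p1 := Rmult_le_pos (INR r - 1) lq ltac:(lra) ltac:(lra).
  have p2 := Rmult_le_pos (INR r - 1) (ln 3) ltac:(lra) ltac:(lra).
  have p3 := Rmult_le_pos (INR m) (ln 2) Hm0 ltac:(lra).
  have p4 := Rmult_le_pos (INR t - 1) (INR m * ln 2) ltac:(lra) p3.
  have h1 : exp (INR m * (INR t + 1) * ln 2 - (INR r - 1) * lq) <= P.
    apply: exp_mono; lra.
  have h2 : exp (2 * INR m * ln 2 - (INR r - 1) * ln 3) <= P.
    apply: exp_mono; lra.
  have h3 : exp (INR m * ln 2) * exp (INR m * ln 2) <= P.
    rewrite -exp_plus; apply: exp_mono; lra.
  have h4 : exp (INR m * ln 2) <= P by apply: exp_mono; lra.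
  have h5 : 1 <= P by apply: exp_ge1; lra.
  have h6 : INR r * exp (INR m * ln 2) <= P.
    apply: Rle_trans h3; apply: Rmult_le_compat_r; [left; apply: exp_pos| lra].
  have e5 := exp_pos (INR m * ln 2).
  move: Hb; set X1 := exp (_ - _ * lq); set X2 := exp (_ - _ * ln 3); move: h1 h2.
  rewrite -/X1 -/X2; move=> h1 h2 Hb.
  nra.
- move=> al [Ha0 Ha1].
  have Hlqpos : 0 < lq by lra.
  have Hk : al * lq < INR t * ln 2.
    rewrite Hbeta in Ha1.
    have E : INR t / (lq / ln 2) = INR t * ln 2 / lq by field; lra.
    rewrite E in Ha1; have := Rmult_lt_compat_r lq _ _ Hlqpos Ha1.
    rewrite /Rdiv Rmult_assoc Rinv_l; lra.
  set d := INR t * ln 2 - al * lq.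
  have Hd : 0 < d by rewrite /d; lra.
  have HK : al * (lq - ln 3) <= (INR t - 1) * ln 2.
    have q1 := Rmult_le_pos al (INR t * ln 3 - lq) ltac:(lra) ltac:(lra).
    have q2 := Rmult_le_pos (INR t - 1) (INR t * ln 2 - al * lq) ltac:(lra) ltac:(lra).
    apply: (Rmult_le_reg_l (INR t)); first lra. nra.
  set c := 12 * INR t / d.
  have Hc : c * d = 12 * INR t by rewrite /c; field; lra.
  have Hc0 : 0 <= c by rewrite /c; apply: Rle_mult_inv_pos; lra.
  exists (INR (Acst t) * exp (2 * lq) + 10 * INR t * exp (2 * ln 3) + (4 * INR t + 1 + c)), 0%N.
  move=> m r v _ Hr Habs Hv.
  have Hb := cover_real t m r v Ht Hr Hv.
  case/andP: Hr => Hr Hrm.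
  have Hr1 : 1 <= INR r := Hrle 1%N r Hr; have Hrm' := Hrle _ _ Hrm.
  have [Hab1 Hab2] := Rabs_def2 _ _ Habs.
  have Hm0 := pos_INR m.
  have Ee : INR (t + 1) * (1 - al * beta t) * ln (INR (2 ^ m)%N) =
            INR m * ln 2 + INR m * d.
    have -> : INR (t + 1) * (1 - al * beta t) = INR (t + 1) - al * (INR (t + 1) * beta t) by ring.
    rewrite Hbeta Ht1 lnN /d; field; lra.
  rewrite /Rpower Ee.
  set e5 := exp (INR m * ln 2).
  have He5 : 1 <= e5 by apply: exp_ge1; nra.
  set P := exp (INR m * ln 2 + INR m * d).
  have EP : P = e5 * exp (INR m * d) by rewrite /P exp_plus.
  have p1 := Rmult_le_pos (INR r + 1 - al * INR m) lq ltac:(lra) ltac:(lra).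
  have p2 := Rmult_le_pos (INR r + 1 - al * INR m) (ln 3) ltac:(lra) ltac:(lra).
  have p3 := Rmult_le_compat_l (INR m) _ _ Hm0 HK.
  have h1 : exp (INR m * (INR t + 1) * ln 2 - (INR r - 1) * lq) <= exp (2 * lq) * P.
    rewrite /P -exp_plus; apply: exp_mono; rewrite /d; nra.
  have h2 : exp (2 * INR m * ln 2 - (INR r - 1) * ln 3) <= exp (2 * ln 3) * P.
    rewrite /P -exp_plus; apply: exp_mono; rewrite /d; nra.
  have h3 : 1 + INR m * d <= exp (INR m * d) by apply: exp_ineq1_le.
  have h4 : (12 * INR t * INR r + 4 * INR t) * e5 + 1 <= (4 * INR t + 1 + c) * P.
    rewrite EP.
    have q1 : (12 * INR t * INR r + 4 * INR t) * e5 + 1 <= (12 * INR t * INR m + 4 * INR t + 1) * e5.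
      have q0 := Rmult_le_pos (INR t) ((INR m - INR r) * e5) ltac:(lra) (Rmult_le_pos (INR m - INR r) e5 ltac:(lra) ltac:(lra)).
      nra.
    apply: Rle_trans q1 _.
    have q2 : 12 * INR t * INR m + 4 * INR t + 1 <= (4 * INR t + 1 + c) * exp (INR m * d).
      apply: Rle_trans (Rmult_le_compat_l _ _ _ _ h3); last lra.
      have q3 := Rmult_le_pos (4 * INR t + 1) (INR m * d) ltac:(lra) ltac:(nra).
      have : c * (INR m * d) = 12 * INR t * INR m by rewrite -Rmult_assoc (Rmult_comm c) Rmult_assoc Hc; ring.
      nra.
    have := Rmult_le_compat_r e5 _ _ ltac:(lra) q2. lra.
  have e2 := exp_pos (2 * lq); have e3 := exp_pos (2 * ln 3).
  move: Hb; set X1 := exp (_ - _ * lq); set X2 := exp (_ - _ * ln 3); move: h1 h2.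
  rewrite -/X1 -/X2; move=> h1 h2 Hb.
  have g1 := Rmult_le_compat_l _ _ _ HA h1.
  have g2 := Rmult_le_compat_l (10 * INR t) _ _ ltac:(lra) h2.
  rewrite -/e5 in Hb. lra.
- move=> s.
  exists (INR (Acst t) * exp ((INR s + 1) * lq) + 10 * INR t * exp ((INR s + 1) * ln 3)
          + 16 * INR t + 1), s.+1 => m v Hsm Hv.
  have Hr : (1 <= m - s <= m)%N by apply/andP; split; lia.
  have Hb := cover_real t m (m - s) v Ht Hr Hv.
  have Ers : INR (m - s) = INR m - INR s by rewrite minus_INR //; apply/leP; lia.
  rewrite Ers in Hb.
  have Hm1 : INR s + 1 <= INR m by rewrite -S_INR; apply: Hrle.
  have Hs0 := pos_INR s.
  have Hlog : log2 (INR (2 ^ m)%N) = INR m by rewrite /log2 lnN; field; lra.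
  rewrite Hlog natpow_exp // INR2.
  have p1 := Rmult_le_pos (INR m) (lq - INR t * ln 2) ltac:(lra) ltac:(lra).
  have p2 := Rmult_le_pos (INR m) (ln 3 - ln 2) ltac:(lra) ltac:(lra).
  apply: (fin_nlogn _ _ _ (INR m - INR s)) Hb => //; try lra.
  + by apply: exp_ge1; nra.
  + rewrite -exp_plus; apply: exp_mono; rewrite -/lq; nra.
  + rewrite -exp_plus; apply: exp_mono; rewrite -/lq; nra.
- move=> al [Ha1 Ha2].
  have Hlqpos : 0 < lq by lra.
  have Hk : INR t * ln 2 <= al * lq.
    rewrite Hbeta in Ha1.
    have E : INR t / (lq / ln 2) = INR t * ln 2 / lq by field; lra.
    rewrite E in Ha1; have := Rmult_le_compat_r lq _ _ (Rlt_le _ _ Hlqpos) Ha1.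
    rewrite /Rdiv Rmult_assoc Rinv_l; lra.
  have Ha0 : 0 <= al by nra.
  have Hk3 : ln 2 <= al * ln 3.
    have q1 := Rmult_le_pos al (INR t * ln 3 - lq) ltac:(lra) ltac:(lra).
    apply: (Rmult_le_reg_l (INR t)); first lra. nra.
  exists (INR (Acst t) * exp (2 * lq) + 10 * INR t * exp (2 * ln 3) + 16 * INR t + 1), 1%N.
  move=> m r v Hm1 Hr Habs Hv.
  have Hb := cover_real t m r v Ht Hr Hv.
  case/andP: Hr => Hr Hrm.
  have Hr1 : 1 <= INR r := Hrle 1%N r Hr; have Hrm' := Hrle _ _ Hrm.
  have Hm1' : 1 <= INR m := Hrle 1%N m Hm1.
  have [Hab1 Hab2] := Rabs_def2 _ _ Habs.
  have Hlog : log2 (INR (2 ^ m)%N) = INR m by rewrite /log2 lnN; field; lra.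
  rewrite Hlog natpow_exp // INR2.
  have p1 := Rmult_le_pos (INR r + 1 - al * INR m) lq ltac:(lra) ltac:(lra).
  have p2 := Rmult_le_pos (INR r + 1 - al * INR m) (ln 3) ltac:(lra) ltac:(lra).
  have p3 := Rmult_le_pos (INR m) (al * lq - INR t * ln 2) ltac:(lra) ltac:(lra).
  have p4 := Rmult_le_pos (INR m) (al * ln 3 - ln 2) ltac:(lra) ltac:(lra).
  apply: (fin_nlogn _ _ _ (INR r)) Hb => //; try lra.
  + by apply: exp_ge1; nra.
  + rewrite -exp_plus; apply: exp_mono; rewrite -/lq; nra.
  + rewrite -exp_plus; apply: exp_mono; rewrite -/lq; nra.
Qed.
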